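(* Let $(Q,\mathcal M)$ be a modulated quiver with $\mathcal M$ v-uniform, $I$ an admissible ideal of $T(Q,\mathcal M)$, $\Psi$ a complexification isomorphism and $J=\Psi(\mathbf e(I\otimes_{\mathbb R}\mathbb C)\mathbf e)$. Then a vertex $v$ of $Q$ is gentle in $(Q,R_I)$ if and only if every fiber of $v$ in $\Gamma$ is gentle in $(\Gamma,J)$.
   Context: Quivers $Q=(Q_0,Q_1,s,t)$ are finite; an arrow $\alpha$ goes from $s(\alpha)$ to $t(\alpha)$. Paths are written from right to left: a path of length $n\ge1$ is $p=\alpha_n\cdots\alpha_1$ with $t(\alpha_k)=s(\alpha_{k+1})$; each vertex $i$ has a trivial path $e_i$. For a division ring $D$, $DQ$ denotes the path algebra of $Q$ over $D$ (free left $D$-module on the paths, scalars commuting with paths, multiplication by concatenation). Let $\mathbb H=\{\begin{bmatrix}a&b\\-\bar b&\bar a\end{bmatrix}:a,b\in\mathbb C\}\subset M_2(\mathbb C)$ be the real quaternions. A modulation $\mathcal M$ of $Q$ assigns to each vertex $i$ a division ring $\mathcal M(i)\in\{\mathbb R,\mathbb C,\mathbb H\}$ and to each arrow $\alpha$ a simple $\mathcal M(t(\alpha))$-$\mathcal M(s(\alpha))$-bimodule $\mathcal M(\alpha)$ on which $\mathbb R$ acts centrally; $(Q,\mathcal M)$ is a modulated quiver. Up to isomorphism there is exactly one such simple bimodule for each pair of these division rings other than $(\mathbb C,\mathbb C)$, and for $(\mathbb C,\mathbb C)$ there are exactly two: $\mathbb C$ with action $a\cdot z\cdot b=azb$, and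 $\overline{\mathbb C}$, which is $\mathbb C$ as a set with action $a\cdot z\cdot b=az\bar b$. For a path $p=\alpha_n\cdots\alpha_1$ put $\mathcal M(p)=\mathcal M(\alpha_n)\otimes_{\mathcal M(s(\alpha_n))}\cdots\otimes_{\mathcal M(s(\alpha_2))}\mathcal M(\alpha_1)$, and $\mathcal M(e_i)=\mathcal M(i)$. The tensor algebra is $T(Q,\mathcal M)=\prod_{i\in Q_0}\mathcal M(i)\oplus\bigoplus_{p}\mathcal M(p)$ (sum over paths of length $\ge1$). An ideal $I$ of $T(Q,\mathcal M)$ is admissible if $A^m\subseteq I\subseteq A^2$ for some $m\ge2$, where $A$ is the ideal generated by $\bigoplus_{\alpha\in Q_1}\mathcal M(\alpha)$. $\mathcal M$ is v-uniform with $D\in\{\mathbb R,\mathbb C,\mathbb H\}$ if $\mathcal M(i)=D$ for all $i\in Q_0$. Then every $\mathcal M(\alpha)$ has underlying set $D$, and for a path $p$ we write $1_{\mathcal M(p)}=1\otimes\cdots\otimes1\in\mathcal M(p)$ ($1_{\mathcal M(e_i)}$ being the identity of $\mathcal M(i)$). For an ideal $I$ of $T(Q,\mathcal M)$ put $R_I=\{\sum_k d_kp_k\in DQ:\ \sum_k d_k1_{\mathcal M(p_k)}\in I\}$, an ideal of $DQ$. The quiver $\Gamma$ of $(Q,\mathcal M)$: each $i\in Q_0$ with $\mathcal M(i)\in\{\mathbb R,\mathbb H\}$ gives one vertex $i$ of $\Gamma$; each $i$ with $\mathcal M(i)=\mathbb C$ gives two vertices $i,\bar i$. Each arrow $\alpha:i\to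 j$ of $Q$ gives arrows of $\Gamma$ as follows: if $\mathcal M(i)=\mathcal M(j)\in\{\mathbb R,\mathbb H\}$, one arrow $\alpha:i\to j$; if $\mathcal M(i)=\mathbb C$ and $\mathcal M(j)\in\{\mathbb R,\mathbb H\}$, arrows $\alpha:i\to j$, $\bar\alpha:\bar i\to j$; if $\mathcal M(i)\in\{\mathbb R,\mathbb H\}$ and $\mathcal M(j)=\mathbb C$, arrows $\alpha:i\to j$, $\bar\alpha:i\to\bar j$; if $\{\mathcal M(i),\mathcal M(j)\}=\{\mathbb R,\mathbb H\}$, two arrows $\alpha,\bar\alpha:i\to j$; if $\mathcal M(i)=\mathcal M(j)=\mathbb C$ and $\mathcal M(\alpha)=\mathbb C$, arrows $\alpha:i\to j$, $\bar\alpha:\bar i\to\bar j$; if $\mathcal M(i)=\mathcal M(j)=\mathbb C$ and $\mathcal M(\alpha)=\overline{\mathbb C}$, arrows $\alpha:\bar i\to j$, $\bar\alpha:i\to\bar j$. The map $\pi:\Gamma\to Q$ sends $i,\bar i\mapsto i$ and $\alpha,\bar\alpha\mapsto\alpha$. A vertex or arrow $x$ of $\Gamma$ is a fiber of $\pi(x)$; a path $\beta_n\cdots\beta_1$ of $\Gamma$ is a fiber of the path $\pi(\beta_n)\cdots\pi(\beta_1)$ of $Q$, and the fibers of a trivial path $e_i$ are the trivial paths $e_{i'}$ with $i'$ a fiber of $i$. Identify $\mathbb R\otimes_{\mathbb R}\mathbb C=\mathbb C$, $\mathbb H\otimes_{\mathbb R}\mathbb C\cong M_2(\mathbb C)$ via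 $h\otimes c\mapsto ch$, and $\mathbb C\otimes_{\mathbb R}\mathbb C\cong\mathbb C\times\mathbb C$ via $a\otimes b\mapsto(ab,\bar ab)$. Let $\mathbf e=(\epsilon_i)_{i\in Q_0}\in\prod_i\mathcal M(i)\otimes_{\mathbb R}\mathbb C\subseteq T(Q,\mathcal M)\otimes_{\mathbb R}\mathbb C$, where $\epsilon_i=1$ if $\mathcal M(i)\in\{\mathbb R,\mathbb C\}$ and $\epsilon_i$ corresponds to the matrix unit $\begin{bmatrix}1&0\\0&0\end{bmatrix}$ if $\mathcal M(i)=\mathbb H$. A complexification isomorphism for $(Q,\mathcal M)$ is a $\mathbb C$-algebra isomorphism $\Psi:\mathbf e(T(Q,\mathcal M)\otimes_{\mathbb R}\mathbb C)\mathbf e\to\mathbb C\Gamma$ such that for every path $p$ of $Q$ (trivial or not), $\Psi(\mathbf e(\mathcal M(p)\otimes_{\mathbb R}\mathbb C)\mathbf e)=\bigoplus_q\mathbb Cq$, the sum over all fibers $q$ of $p$ in $\Gamma$; such isomorphisms exist. Gentle vertices. Let $k$ be a division ring, $Q$ a quiver and $R$ an ideal of $kQ$. A vertex $v$ is gentle in $(Q,R)$ if: (1) at most two arrows start at $v$ and at most two arrows end at $v$; (2) for all arrows $\alpha,\beta,\gamma$ with $\beta\ne\gamma$ and $t(\beta)=t(\gamma)=s(\alpha)=v$, exactly one of $\alpha\beta,\alpha\gamma$ belongs to $R$; (3) for all arrows $\alpha,\gamma,\beta$ with $\alpha\ne\gamma$ and $s(\alpha)=s(\gamma)=t(\beta)=v$,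 exactly one of $\alpha\beta,\gamma\beta$ belongs to $R$. *)

(* Defs.v *)
From HB Require Import structures.
From mathcomp Require Import all_boot all_order all_algebra.
From mathcomp Require Import Rstruct complex.

Set Implicit Arguments.
Unset Strict Implicit.
Unset Printing Implicit Defensive.

Import GRing.Theory Num.Theory.
Local Open Scope ring_scope.

Definition RR : rcfType := Rdefinitions.R.
Definition CC : nzRingType := RR[i].

Definition is_quat (M : 'M[CC]_2) : bool :=
  (M 1 1 == conjc (M 0 0)) && (M 1 0 == - conjc (M 0 1)).

Inductive divkind := DR | DC | DH.

(* ambient ring in which the coefficients of D are taken *)
Definition Cty (k : divkind) : nzRingType :=
  match k with DR => RR | DC => CC | DH => 'M[CC]_2 end.

Definition inD (k : divkind) : pred (Cty k) :=
  match k return pred (Cty k) with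
  | DR => predT | DC => predT | DH => is_quat end.

Definition rscal (k : divkind) : RR -> Cty k :=
  match k return RR -> Cty k with
  | DR => fun r => r
  | DC => fun r => Complex r 0
  | DH => fun r => (Complex r 0 : CC)%:M end.

(* complex conjugation on D = C (identity for the other cases; it is only
   used when D = C) *)
Definition dconj (k : divkind) : Cty k -> Cty k :=
  match k return Cty k -> Cty k with
  | DC => fun z => conjc z
  | DR => id | DH => id end.

Arguments inD : clear implicits.
Arguments rscal : clear implicits.
Arguments dconj : clear implicits.

Record quiver := Quiver {
  qV : finType; qA : finType; qs : qA -> qV; qt : qA -> qV }.
Arguments qs {q}.
Arguments qt {q}.

Section Paths.
Variable G : quiver.

(* A (raw) path is a start vertex together with the list of its arrows in
   the order in which they are traversed: (v, [:: a1; ...; an]) stands for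
   the path  an ... a1  starting at v;  (v, [::]) is the trivial path e_v. *)
Definition rpath := (qV G * seq (qA G))%type.

Fixpoint pvalid (v : qV G) (s : seq (qA G)) : bool :=
  if s is a :: s' then (qs a == v) && pvalid (qt a) s' else true.

Definition valid (p : rpath) : bool := pvalid p.1 p.2.

Definition pend (v : qV G) (s : seq (qA G)) : qV G :=
  foldl (fun _ a => qt a) v s.

(* the path  b2 b1  (first b1, then b2), i.e. the product b2*b1 *)
Definition path2 (b2 b1 : qA G) : rpath := (qs b1, [:: b1; b2]).

Variable K : nzRingType.

(* elements of the path algebra (or of a tensor algebra of a v-uniform
   modulation): coefficient functions on paths *)
Definition elt := rpath -> K.

Definition fin_supp (f : elt) : Prop :=
  exists r : seq rpath, forall p, p \notin r -> f p = 0.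
Definition valid_supp (f : elt) : Prop :=
  forall p, ~~ valid p -> f p = 0.
Definition palg (f : elt) : Prop := fin_supp f /\ valid_supp f.

Definition pzero : elt := fun _ => 0.
Definition padd (f g : elt) : elt := fun p => f p + g p.
Definition pone : elt := fun p => if p.2 is [::] then 1 else 0.
Definition pbasis (x : rpath) : elt := fun p => if p == x then 1 else 0.

(* twisted multiplication:  (d p) (d' q) = d sig_p(d') (p q);
   sig s is the twist attached to the path with arrow list s *)
Definition pmul (sig : seq (qA G) -> K -> K) (f g : elt) : elt :=
  fun p => \sum_(j < (size p.2).+1)
     f (pend p.1 (take j p.2), drop j p.2) * sig (drop j p.2) (g (p.1, take j p.2)).

End Paths.
Arguments pzero {G K}.
Arguments pone {G K}.

Definition exactly_one (P1 P2 : Prop) : Prop := (P1 /\ ~ P2) \/ (~ P1 /\ P2).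

Definition gentle (G : quiver) (K : nzRingType) (Rel : elt G K -> Prop)
    (v : qV G) : Prop :=
  [/\ #|[set a : qA G | qs a == v]| <= 2,
      #|[set a : qA G | qt a == v]| <= 2,
      (forall a b c : qA G, b != c -> qt b = v -> qt c = v -> qs a = v ->
         exactly_one (Rel (pbasis K (path2 a b))) (Rel (pbasis K (path2 a c))))
    & (forall a c b : qA G, a != c -> qs a = v -> qs c = v -> qt b = v ->
         exactly_one (Rel (pbasis K (path2 a b))) (Rel (pbasis K (path2 c b))))]%N.

(* A v-uniform modulation: all vertices get D = vk; when D = C, the arrows
   with  vtw a = true  get the bimodule Cbar, the others get C.  (When
   D = R or H, every bimodule is D itself and vtw is irrelevant.) *)
Record vumod (Q : quiver) := VUMod { vk : divkind; vtw : qA Q -> bool }.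

Section Tensor.
Variables (Q : quiver) (M : vumod Q).
Local Notation k := (vk M).
Local Notation D := (Cty k).

(* the twist sigma_p : for a path p,  1_{M(p)} d = sigma_p(d) 1_{M(p)} *)
Definition Tsig (s : seq (qA Q)) : D -> D :=
  if odd (count (vtw M) s) then dconj k else id.

(* Model of T(Q,M): element  sum_p f(p) 1_{M(p)}  is represented by its
   coefficient function f : paths -> D (M(p) = D 1_{M(p)}). *)
Definition Tel (f : elt Q D) : Prop := palg f /\ forall p, inD k (f p).
Definition Tmul : elt Q D -> elt Q D -> elt Q D := pmul Tsig.

Definition DQel (f : elt Q D) : Prop := palg f /\ forall p, inD k (f p).

Definition Tideal (I : elt Q D -> Prop) : Prop :=
  [/\ forall f, I f -> Tel f,
      I pzero,
      forall f g, I f -> I g -> I (padd f g),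
      forall f, I f -> I (fun p => - f p)
    & forall a f, Tel a -> I f -> I (Tmul a f) /\ I (Tmul f a)].

Definition Tgen (S : elt Q D -> Prop) : elt Q D -> Prop :=
  fun f => forall I, Tideal I -> (forall g, S g -> I g) -> I f.

Definition Tprod (I1 I2 : elt Q D -> Prop) : elt Q D -> Prop :=
  Tgen (fun f => exists x y, I1 x /\ I2 y /\ f = Tmul x y).

(* the arrow ideal A, generated by the sum of the M(alpha) *)
Definition Tarrows : elt Q D -> Prop :=
  Tgen (fun f => Tel f /\ forall p, size p.2 != 1%N -> f p = 0).

Fixpoint Tpow (m : nat) : elt Q D -> Prop :=
  match m with
  | 0 => Tel
  | 1 => Tarrows
  | m'.+1 => Tprod (Tpow m') Tarrows
  end.

Definition admissible (I : elt Q D -> Prop) : Prop :=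
  Tideal I /\
  exists m, (2 <= m)%N /\ (forall f, Tpow m f -> I f) /\ (forall f, I f -> Tpow 2 f).

(* R_I = { sum d_k p_k in DQ : sum d_k 1_{M(p_k)} in I }; in the coefficient
   model the map  sum d_k p_k |-> sum d_k 1_{M(p_k)}  is the identity on
   coefficient functions. *)
Definition toT (f : elt Q D) : elt Q D := f.
Definition R_I (I : elt Q D -> Prop) : elt Q D -> Prop :=
  fun f => DQel f /\ I (toT f).

(* Complexification  T (x)_R C  =  T + T i  (pairs (x, y) = x(x)1 + y(x)i) *)

Definition TC := (elt Q D * elt Q D)%type.
Definition TCel (z : TC) : Prop := Tel z.1 /\ Tel z.2.

Definition rsc (r : RR) (f : elt Q D) : elt Q D := fun p => rscal k r * f p.

Definition TCadd (z w : TC) : TC := (padd z.1 w.1, padd z.2 w.2).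
Definition TCmul (z w : TC) : TC :=
  (padd (Tmul z.1 w.1) (fun p => - Tmul z.2 w.2 p),
   padd (Tmul z.1 w.2) (Tmul z.2 w.1)).
Definition TCscale (c : CC) (z : TC) : TC :=
  (padd (rsc (complex.Re c) z.1) (fun p => - rsc (complex.Im c) z.2 p),
   padd (rsc (complex.Im c) z.1) (rsc (complex.Re c) z.2)).

(* coordinates (x, y) of eps_i = x (x) 1 + y (x) i in M(i) (x)_R C:
   eps_i = 1 for D = R, C;  for D = H, under h (x) c |-> c h,
   (1/2) 1 (x) 1 - (1/2) diag(i,-i) (x) i  |->  1/2 + 1/2 diag(1,-1) = E_11 *)
Definition epsK : Cty k * Cty k :=
  match vk M as k0 return Cty k0 * Cty k0 with
  | DR => (1, 0)
  | DC => (1, 0)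
  | DH => ((Complex 2^-1 0 : CC)%:M : 'M[CC]_2,
           - diag_mx (\row_(j < 2) (if j == 0 then (Complex 0 2^-1 : CC)
                                     else (Complex 0 (- 2^-1) : CC)) : 'rV[CC]_2))
  end.

Definition Te : TC :=
  ((fun p => if p.2 is [::] then epsK.1 else 0),
   (fun p => if p.2 is [::] then epsK.2 else 0)).

Definition eTe (z : TC) : Prop := exists w, TCel w /\ z = TCmul (TCmul Te w) Te.

Definition eIe (I : elt Q D -> Prop) (z : TC) : Prop :=
  exists w, I w.1 /\ I w.2 /\ z = TCmul (TCmul Te w) Te.

Definition supp_on (p : rpath Q) (f : elt Q D) : Prop :=
  forall q, q != p -> f q = 0.
Definition eMpe (p : rpath Q) (z : TC) : Prop :=
  exists w, TCel w /\ supp_on p w.1 /\ supp_on p w.2 /\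
            z = TCmul (TCmul Te w) Te.

Record cover := Cover {
  cq : quiver; piV : qV cq -> qV Q; piA : qA cq -> qA Q }.

(* for D = C: vertex (i,false) = i, (i,true) = ibar;
   arrow (a,false) = a, (a,true) = abar.
   If M(a) = C:  a : i -> j, abar : ibar -> jbar;
   if M(a) = Cbar:  a : ibar -> j, abar : i -> jbar. *)
Definition dblQ : quiver :=
  @Quiver (Finite.clone (qV Q * bool)%type _) (Finite.clone (qA Q * bool)%type _)
   (fun a : qA Q * bool => (qs a.1, a.2 (+) vtw M a.1))
   (fun a : qA Q * bool => (qt a.1, a.2)).

Definition Gamma : cover :=
  match k with
  | DC => @Cover dblQ (fun x : qV Q * bool => x.1) (fun a : qA Q * bool => a.1)
  | _ => @Cover Q id id
  end.

Local Notation GQ := (cq Gamma).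

Definition is_fiber (q : rpath GQ) (p : rpath Q) : bool :=
  valid q && valid p && (piV q.1 == p.1) && (map (@piA Gamma) q.2 == p.2).

Definition CGel (g : elt GQ CC) : Prop := palg g.
Definition CGmul : elt GQ CC -> elt GQ CC -> elt GQ CC :=
  pmul (fun _ => id).

Definition cplx_iso (Psi : TC -> elt GQ CC) : Prop :=
  and ([/\ (forall z, eTe z -> CGel (Psi z)),
      (forall z w, eTe z -> eTe w -> Psi (TCadd z w) = padd (Psi z) (Psi w)),
      (forall c z, eTe z -> Psi (TCscale c z) = (fun q => c * Psi z q)),
      (forall z w, eTe z -> eTe w -> Psi (TCmul z w) = CGmul (Psi z) (Psi w))
    & Psi Te = pone])
  ([/\ (forall z w, eTe z -> eTe w -> Psi z = Psi w -> z = w),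
      (forall g, CGel g -> exists2 z, eTe z & Psi z = g)
    & (forall p : rpath Q, valid p -> forall g,
         (exists2 z, eMpe p z & Psi z = g) <->
         (CGel g /\ forall q, ~~ is_fiber q p -> g q = 0))]).

Definition Jideal (Psi : TC -> elt GQ CC) (I : elt Q D -> Prop) : elt GQ CC -> Prop :=
  fun g => exists2 z, eIe I z & Psi z = g.

End Tensor.

(* Main.v *)
Require Import Defs.
From HB Require Import structures.
From mathcomp Require Import all_boot all_order all_algebra.
From mathcomp Require Import Rstruct complex.
From Stdlib Require Import FunctionalExtensionality.

Set Implicit Arguments.
Unset Strict Implicit.
Unset Printing Implicit Defensive.
Import GRing.Theory Num.Theory.
Local Open Scope ring_scope.


Lemma CCconj0 : conjc (0 : CC) = 0. Proof. exact: (conjc0 RR). Qed.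
Lemma CCconj1 : conjc (1 : CC) = 1. Proof. exact: (conjc1 RR). Qed.
Lemma is_quat_scalar (c : CC) : conjc c = c -> is_quat c%:M.
Proof.
move=> Hc; rewrite /is_quat !mxE !eqxx !mulr1n Hc eqxx /=.
by rewrite !mulr0n ?CCconj0 ?conjc0 ?oppr0 ?eqxx.
Qed.

Lemma dconj0 k : dconj k 0 = 0.
Proof. case: k => //=; exact: CCconj0. Qed.

Lemma inD0 k : inD k 0.
Proof. case: k => //=; by rewrite /is_quat !mxE CCconj0 oppr0 eqxx. Qed.

Lemma inD1 k : inD k 1.
Proof. case: k => //=; exact: (is_quat_scalar CCconj1). Qed.

Section Gen.
Variables (Q : quiver) (M : vumod Q).
Local Notation D := (Cty (vk M)).

Definition triv (f : elt Q D) := forall r : rpath Q, r.2 != [::] -> f r = 0.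

Lemma Tsig0 s : Tsig (M:=M) s 0 = 0.
Proof. rewrite /Tsig; case: ifP => // _; exact: dconj0. Qed.

Lemma Tmul_triv_l (a x : elt Q D) : triv a -> forall r, Tmul a x r = a (pend r.1 r.2, [::]) * x r.
Proof.
move=> Ha r; rewrite /Tmul /pmul big_ord_recr /= big1 ?add0r.
  by rewrite take_size drop_size /Tsig /= -surjective_pairing.
move=> j _; rewrite Ha ?mul0r //= -size_eq0 size_drop subn_eq0 -ltnNge.
exact: ltn_ord.
Qed.

Lemma supp_padd p (f g : elt Q D) : supp_on p f -> supp_on p g -> supp_on p (padd f g).
Proof. by move=> Hf Hg r Hr; rewrite /padd Hf // Hg // addr0. Qed.

Lemma supp_opp p (f : elt Q D) : supp_on p f -> supp_on p (fun r => - f r).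
Proof. by move=> Hf r Hr; rewrite Hf // oppr0. Qed.

Lemma supp_mul_l p (a y : elt Q D) : triv a -> supp_on p y -> supp_on p (Tmul a y).
Proof. by move=> Ha Hy r Hr; rewrite Tmul_triv_l // Hy // mulr0. Qed.

Lemma supp_mul_r p (a y : elt Q D) : triv a -> supp_on p y -> supp_on p (Tmul y a).
Proof.
move=> Ha Hy r Hr; rewrite /Tmul /pmul big1 // => j _.
case E: (take j r.2) => [|x s].
  have Ed : drop j r.2 = r.2 by move: (cat_take_drop j r.2); rewrite E.
  by rewrite Ed Hy ?mul0r // -surjective_pairing.
by rewrite (Ha (r.1, x :: s)) // Tsig0 mulr0.
Qed.

Lemma triv_palg (f : elt Q D) : triv f -> palg f.
Proof.
move=> Hf; split.
  exists [seq (x, [::]) | x <- enum (qV Q)] => r Hr; apply: Hf.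
  apply: contra Hr; case: r => x s /= /eqP ->.
  by apply/mapP; exists x; rewrite ?mem_enum.
by move=> [x [|b s]] //= _; rewrite Hf.
Qed.

Definition cst (d : D) : elt Q D := fun r => if r.2 is [::] then d else 0.

Lemma cst_triv d : triv (cst d).
Proof. by case=> x [|b s]. Qed.

Lemma cst_Tel d : inD (vk M) d -> Tel (cst d).
Proof.
move=> Hd; split; first exact/triv_palg/cst_triv.
by case=> x [|b s] //=; exact: inD0.
Qed.

Lemma Tmul_cst d (x : elt Q D) r : Tmul (cst d) x r = d * x r.
Proof. by rewrite Tmul_triv_l //; exact: cst_triv. Qed.

Lemma pbasis_palg K (p : rpath Q) : valid p -> palg (pbasis K p).
Proof.
move=> Hp; split.
  by exists [:: p] => r; rewrite inE /pbasis => /negbTE ->.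
move=> r Hr; rewrite /pbasis; case: eqP => // E; by rewrite E Hp in Hr.
Qed.

Lemma pbasis_Tel (p : rpath Q) : valid p -> Tel (pbasis D p).
Proof.
move=> Hp; split; first exact: pbasis_palg.
by move=> r; rewrite /pbasis; case: ifP => _; [exact: inD1 | exact: inD0].
Qed.

End Gen.


Section Quat.
Local Notation C := (RR[i]).

Lemma o10 : widen_ord (leqnSn 1) ord_max = 0 :> 'I_2. Proof. exact: val_inj. Qed.
Lemma o11 : ord_max = 1 :> 'I_2. Proof. exact: val_inj. Qed.
Lemma ord2 (i : 'I_2) : i = 0 \/ i = 1.
Proof. case: i => [[|[|//]] Hi]; [left|right]; exact: val_inj. Qed.

Lemma quat_inv (d : 'M[C]_2) : d 1 1 = (d 0 0)^* -> d 1 0 = - (d 0 1)^* -> d != 0 ->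
  exists e : 'M[C]_2, [/\ e 1 1 = (e 0 0)^*, e 1 0 = - (e 0 1)^* & e *m d = 1%:M].
Proof.
move=> H11 H10 Hd.
set a := d 0 0 in H11 *; set b := d 0 1 in H10 *.
pose n := a * a^* + b * b^*.
have n0 : n != 0.
  apply: contra Hd => /eqP; rewrite /n => /eqP.
  rewrite paddr_eq0 ?mul_conjC_ge0 // !mul_conjC_eq0 => /andP [/eqP a0 /eqP b0].
  apply/eqP/matrixP => i j; rewrite mxE.
  case: (ord2 i) => ->; case: (ord2 j) => -> //.
  - by rewrite H10 b0 conjC0 oppr0.
  - by rewrite H11 a0 conjC0.
have nc : n^* = n by rewrite /n rmorphD !rmorphM /= !conjCK mulrC [b^* * _]mulrC addrC.
pose e : 'M[C]_2 := \matrix_(i, j) (n^-1 * (if i == 0 then (if j == 0 then a^* else - b)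
                                     else (if j == 0 then b^* else a))).
exists e; split.
- rewrite !mxE /= rmorphM fmorphV /=. rewrite conjCK. congr (_ * _). congr (_^-1). exact: (esym nc).
- rewrite !mxE /= rmorphM fmorphV /= rmorphN mulrN opprK. congr (_ * _). congr (_^-1). exact: (esym nc).
apply/matrixP => i j; rewrite !mxE !big_ord_recr big_ord0 /= add0r o10 o11 !mxE /=.
case: (ord2 i) => ->; case: (ord2 j) => -> /=; rewrite ?H11 ?H10 -/a -/b.
- by rewrite -!mulrA -mulrDr mulrNN [a^* * a]mulrC mulVf.
- by rewrite -!mulrA -mulrDr mulNr [a^* * b]mulrC subrr mulr0.
- by rewrite -!mulrA -mulrDr mulrN [b^* * a]mulrC subrr mulr0.
- by rewrite -!mulrA -mulrDr addrC [b^* * b]mulrC mulVf.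
Qed.
End Quat.


Section Gam.
Variables (Q : quiver) (M : vumod Q).
Local Notation G := (cq (Gamma M)).

Lemma G1s (x : qA G) : piV (qs x) = qs (piA x).
Proof. move: x; rewrite /Gamma; by case: (vk M). Qed.
Lemma G1t (x : qA G) : piV (qt x) = qt (piA x).
Proof. move: x; rewrite /Gamma; by case: (vk M). Qed.

Lemma G3 (v : qV Q) : exists w : qV G, piV w = v.
Proof. rewrite /Gamma; case: (vk M); (by exists v) || by exists (v, false). Qed.

Lemma G2t (w : qV G) (b : qA Q) : qt b = piV w -> exists x : qA G, piA x = b /\ qt x = w.
Proof.
move: w; rewrite /Gamma; case: (vk M) => /= w Hb; try by exists b.
by exists (b, w.2); rewrite /= Hb; case: w {Hb}.
Qed.

Lemma G2s (w : qV G) (b : qA Q) : qs b = piV w -> exists x : qA G, piA x = b /\ qs x = w.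
Proof.
move: w; rewrite /Gamma; case: (vk M) => /= w Hb; try by exists b.
by exists (b, w.2 (+) vtw M b); rewrite /= Hb addbK; case: w {Hb}.
Qed.

Lemma G2t_uniq (x y : qA G) : qt x = qt y -> piA x = piA y -> x = y.
Proof.
move: x y; rewrite /Gamma; case: (vk M) => /= x y // [_ E2] E1.
by case: x y E1 E2 => [x1 x2] [y1 y2] /= -> ->.
Qed.

Lemma G2s_uniq (x y : qA G) : qs x = qs y -> piA x = piA y -> x = y.
Proof.
move: x y; rewrite /Gamma; case: (vk M) => /= x y // [_ E2] E1.
case: x y E1 E2 => [x1 x2] [y1 y2] /= E; subst y1 => /addIb ->; done.
Qed.

Lemma card_t (w : qV G) :
  #|[set a : qA G | qt a == w]| = #|[set a : qA Q | qt a == piV w]|.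
Proof.
have -> : [set a : qA Q | qt a == piV w] = (@piA _ (Gamma M)) @: [set a : qA G | qt a == w].
  apply/setP => b; rewrite inE; apply/idP/idP.
    move/eqP/G2t => [x [<- Hx]]; apply/imsetP; exists x => //; by rewrite inE Hx.
  by case/imsetP => x; rewrite inE => /eqP <- ->; rewrite G1t.
rewrite card_in_imset // => x y; rewrite !inE => /eqP Hx /eqP Hy.
by apply: G2t_uniq; rewrite Hx Hy.
Qed.

Lemma card_s (w : qV G) :
  #|[set a : qA G | qs a == w]| = #|[set a : qA Q | qs a == piV w]|.
Proof.
have -> : [set a : qA Q | qs a == piV w] = (@piA _ (Gamma M)) @: [set a : qA G | qs a == w].
  apply/setP => b; rewrite inE; apply/idP/idP.
    move/eqP/G2s => [x [<- Hx]]; apply/imsetP; exists x => //; by rewrite inE Hx.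
  by case/imsetP => x; rewrite inE => /eqP <- ->; rewrite G1s.
rewrite card_in_imset // => x y; rewrite !inE => /eqP Hx /eqP Hy.
by apply: G2s_uniq; rewrite Hx Hy.
Qed.
End Gam.


Lemma inD_inv k (d : Cty k) : inD k d -> d != 0 -> exists e, inD k e /\ e * d = 1.
Proof.
case: k d => /= d Hq Hd.
- by exists (d^-1); split => //; rewrite mulVf.
- by exists ((d : RR[i])^-1); split => //; rewrite mulVf.
move: Hq; rewrite /is_quat => /andP [/eqP H11 /eqP H10].
have [e [E11 E10 Ed]] := quat_inv H11 H10 Hd.
exists e; split; last exact: Ed.
by rewrite /is_quat; apply/andP; split; apply/eqP.
Qed.

Lemma epsK_inD Q (M : vumod Q) : inD (vk M) (epsK M).1 /\ inD (vk M) (epsK M).2.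
Proof.
rewrite /epsK; case: M => k tw /=; case: k => //=; split.
- by apply: is_quat_scalar; rewrite /= oppr0.
- rewrite /is_quat !mxE /=; apply/andP; split; apply/eqP; rewrite ?mulr1n ?mulr0n ?oppr0 ?opprK /=.
  + by apply/eqP; rewrite eq_complex /= oppr0 opprK !eqxx.
  + reflexivity.
Qed.

Lemma Te_triv Q (M : vumod Q) : triv (Te M).1 /\ triv (Te M).2.
Proof. by split; case=> x [|b s]. Qed.

Lemma Te_Tel Q (M : vumod Q) : Tel (Te M).1 /\ Tel (Te M).2.
Proof.
have [t1 t2] := Te_triv M; have [e1 e2] := epsK_inD M.
split; split; try exact: triv_palg.
- by case=> x [|b s] //=; exact: inD0.
- by case=> x [|b s] //=; exact: inD0.
Qed.


Section Key.
Variables (Q : quiver) (M : vumod Q) (I : elt Q (Cty (vk M)) -> Prop)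
  (HI : Tideal I) (Psi : TC M -> elt (cq (Gamma M)) CC) (HPsi : cplx_iso Psi).
Local Notation D := (Cty (vk M)).
Local Notation G := (cq (Gamma M)).

Lemma eIe_I z : eIe I z -> I z.1 /\ I z.2.
Proof.
case=> w [I1 [I2 ->]].
move: (HI) => [Htel H0 Hadd Hneg Hmul].
have [T1 T2] := Te_Tel M.
have L a f : Tel a -> I f -> I (Tmul a f) by move=> Ta If; exact: (Hmul a f Ta If).1.
have R a f : Tel a -> I f -> I (Tmul f a) by move=> Ta If; exact: (Hmul a f Ta If).2.
rewrite /TCmul /=; split; apply: (Hadd); try apply: (Hneg); apply: (R) => //;
  apply: (Hadd); try apply: (Hneg); exact: (L).
Qed.

Lemma eIe_eTe z : eIe I z -> eTe z.
Proof.
move: (HI) => [Htel _ _ _ _].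
by case=> w [I1 [I2 ->]]; exists w; split => //; split; apply: Htel.
Qed.

Lemma eMpe_supp (p : rpath Q) (z : TC M) : eMpe p z -> supp_on p z.1 /\ supp_on p z.2.
Proof.
case=> w [_ [S1 [S2 ->]]].
have [T1 T2] := Te_triv M.
rewrite /TCmul /=; split; apply: supp_padd; try apply: supp_opp;
  apply: supp_mul_r => //; apply: supp_padd; try apply: supp_opp;
  exact: supp_mul_l.
Qed.

Lemma eMpe_eTe (p : rpath Q) (z : TC M) : eMpe p z -> eTe z.
Proof. by case=> w [Tw [_ [_ ->]]]; exists w. Qed.

Lemma I_basis (p : rpath Q) (x : elt Q D) : I x -> supp_on p x -> x p != 0 -> I (pbasis D p).
Proof.
move=> Ix Sx nx.
move: (HI) => [Htel _ _ _ Hmul].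
have [e [He Hed]] := inD_inv ((Htel x Ix).2 p) nx.
have -> : pbasis D p = Tmul (cst e) x.
  apply: functional_extensionality => r; rewrite Tmul_cst /pbasis.
  by case: eqP => [->|/eqP ne]; [rewrite Hed | rewrite Sx // mulr0].
exact: (Hmul _ _ (cst_Tel He) Ix).1.
Qed.

Lemma key (a b : qA G) : qs a = qt b ->
  Jideal Psi I (pbasis CC (path2 a b)) <-> I (pbasis D (path2 (piA a) (piA b))).
Proof.
move=> Hab.
set q := path2 a b; set p := path2 (piA a) (piA b).
have vq : valid q by rewrite /valid /= Hab !eqxx.
have vp : valid p by rewrite /valid /= -(G1s a) -G1t Hab !eqxx.
have fib : is_fiber q p by rewrite /is_fiber vq vp /= G1s !eqxx.
have HG : CGel (pbasis CC q) /\ forall q', ~~ is_fiber q' p -> pbasis CC q q' = 0.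
  split; first exact: pbasis_palg.
  by move=> q' nf; rewrite /pbasis; case: eqP => // E; rewrite E fib in nf.
case: HPsi => [[H1 H2 H3 H4 H5] [H6 H7 H8]].
have Hfib := H8 p vp (pbasis CC q).
split.
- case=> z Hz Pz.
  have [z' Hz' Pz'] := Hfib.2 HG.
  have zz : z = z' by apply: H6; [exact: (eIe_eTe Hz) | exact: (eMpe_eTe Hz') | rewrite Pz Pz'].
  subst z'.
  have [I1 I2] := eIe_I Hz; have [S1 S2] := eMpe_supp Hz'.
  case: (eqVneq (z.1 p) 0) => [e1|ne]; last exact: (I_basis I1).
  case: (eqVneq (z.2 p) 0) => [e2|ne]; last exact: (I_basis I2).
  exfalso.
  have Z1 : z.1 = fun _ => 0.
    by apply: functional_extensionality => r; case: (eqVneq r p) => [->|/S1].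
  have Z2 : z.2 = fun _ => 0.
    by apply: functional_extensionality => r; case: (eqVneq r p) => [->|/S2].
  have : Psi z = Psi (TCscale 0 z).
    congr Psi; case: z {Hz Pz Pz' Hz' I1 I2 S1 S2 e1 e2} Z1 Z2 => z1 z2 /= -> ->.
    rewrite /TCscale /padd /rsc /=; congr pair; apply: functional_extensionality => r;
      by rewrite !mulr0 ?oppr0 ?addr0.
  rewrite H3; last exact: eIe_eTe.
  rewrite Pz => /(congr1 (fun g => g q)); rewrite /pbasis eqxx mul0r => /eqP.
  by rewrite oner_eq0.
- move=> Ip.
  have [z Hz Pz] := Hfib.2 HG.
  exists z => //.
  case: Hz => w [[T1 T2] [S1 [S2 Ez]]].
  move: (HI) => [_ _ _ _ Hmul].
  have E (f : elt Q D) : Tel f -> supp_on p f -> f = Tmul (cst (f p)) (pbasis D p).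
    move=> Tf Sf; apply: functional_extensionality => r; rewrite Tmul_cst /pbasis.
    by case: eqP => [->|/eqP ne]; [rewrite mulr1 | rewrite Sf // mulr0].
  exists w; split; [|split] => //.
  + rewrite (E w.1 T1 S1); exact: (Hmul _ _ (cst_Tel (T1.2 p)) Ip).1.
  + rewrite (E w.2 T2 S2); exact: (Hmul _ _ (cst_Tel (T2.2 p)) Ip).1.
Qed.
End Key.


Lemma ex1_iff (P1 P2 Q1 Q2 : Prop) : (P1 <-> Q1) -> (P2 <-> Q2) ->
  exactly_one P1 P2 -> exactly_one Q1 Q2.
Proof. rewrite /exactly_one; tauto. Qed.

Lemma RI_iff Q (M : vumod Q) (I : elt Q (Cty (vk M)) -> Prop) (a b : qA Q) :
  qs a = qt b -> R_I I (pbasis _ (path2 a b)) <-> I (pbasis _ (path2 a b)).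
Proof.
move=> Hab; rewrite /R_I /toT; split; first by case.
move=> H; split => //; apply: pbasis_Tel.
by rewrite /valid /= Hab !eqxx.
Qed.

Theorem lemma5p1 (Q : quiver) (M : vumod Q)
    (I : elt Q (Cty (vk M)) -> Prop) (HI : admissible I)
    (Psi : TC M -> elt (cq (Gamma M)) CC) (HPsi : cplx_iso Psi)
    (v : qV Q) :
  gentle (R_I I) v <->
  (forall w : qV (cq (Gamma M)), piV w = v -> gentle (Jideal Psi I) w).
Proof.
have HT : Tideal I by case: HI.
have K := key HT HPsi.
split.
- case=> C1 C2 C3 C4 w Hw; split.
  + by rewrite card_s Hw.
  + by rewrite card_t Hw.
  + move=> a b c bc tb tc sa.
    have Hab : qs a = qt b by rewrite sa tb.
    have Hac : qs a = qt c by rewrite sa tc.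
    apply: (ex1_iff (iff_sym (K _ _ Hab)) (iff_sym (K _ _ Hac))).
    have Hab' : qs (piA a) = qt (piA b) by rewrite -G1s -G1t Hab.
    have Hac' : qs (piA a) = qt (piA c) by rewrite -G1s -G1t Hac.
    apply: (ex1_iff (RI_iff I Hab') (RI_iff I Hac')).
    apply: C3.
    * apply: contra bc => /eqP E; apply/eqP; apply: G2t_uniq => //; by rewrite tb tc.
    * by rewrite -G1t tb.
    * by rewrite -G1t tc.
    * by rewrite -G1s sa.
  + move=> a c b ac sa sc tb.
    have Hab : qs a = qt b by rewrite sa tb.
    have Hcb : qs c = qt b by rewrite sc tb.
    apply: (ex1_iff (iff_sym (K _ _ Hab)) (iff_sym (K _ _ Hcb))).
    have Hab' : qs (piA a) = qt (piA b) by rewrite -G1s -G1t Hab.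
    have Hcb' : qs (piA c) = qt (piA b) by rewrite -G1s -G1t Hcb.
    apply: (ex1_iff (RI_iff I Hab') (RI_iff I Hcb')).
    apply: C4.
    * apply: contra ac => /eqP E; apply/eqP; apply: G2s_uniq => //; by rewrite sa sc.
    * by rewrite -G1s sa.
    * by rewrite -G1s sc.
    * by rewrite -G1t tb.
- move=> H.
  have [w0 Hw0] := G3 M v.
  case: (H w0 Hw0) => C1 C2 C3 C4; split.
  + by rewrite -Hw0 -card_s.
  + by rewrite -Hw0 -card_t.
  + move=> a b c bc tb tc sa.
    have [b' [Eb tb']] := G2t (etrans tb (esym Hw0)).
    have [c' [Ec tc']] := G2t (etrans tc (esym Hw0)).
    have [a' [Ea sa']] := G2s (etrans sa (esym Hw0)).
    have Hab : qs a = qt b by rewrite sa tb.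
    have Hac : qs a = qt c by rewrite sa tc.
    apply: (ex1_iff (iff_sym (RI_iff I Hab)) (iff_sym (RI_iff I Hac))).
    have Hab' : qs a' = qt b' by rewrite sa' tb'.
    have Hac' : qs a' = qt c' by rewrite sa' tc'.
    have := ex1_iff (K _ _ Hab') (K _ _ Hac').
    rewrite Ea Eb Ec; apply; apply: C3 => //.
    by apply: contra bc => /eqP E; apply/eqP; rewrite -Eb -Ec E.
  + move=> a c b ac sa sc tb.
    have [b' [Eb tb']] := G2t (etrans tb (esym Hw0)).
    have [c' [Ec sc']] := G2s (etrans sc (esym Hw0)).
    have [a' [Ea sa']] := G2s (etrans sa (esym Hw0)).
    have Hab : qs a = qt b by rewrite sa tb.
    have Hcb : qs c = qt b by rewrite sc tb.
    apply: (ex1_iff (iff_sym (RI_iff I Hab)) (iff_sym (RI_iff I Hcb))).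
    have Hab' : qs a' = qt b' by rewrite sa' tb'.
    have Hcb' : qs c' = qt b' by rewrite sc' tb'.
    have := ex1_iff (K _ _ Hab') (K _ _ Hcb').
    rewrite Ea Eb Ec; apply; apply: C4 => //.
    by apply: contra ac => /eqP E; apply/eqP; rewrite -Ea -Ec E.
Qed.
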